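(* Let $i\ge 7$ be an odd integer such that $(i+1)/2$ is even. Then for every $t\in\{1,\dots,\tfrac{i-3}{4}\}$, \[S(i)=\left\langle 2,\tfrac{i+1}{2}+2t+1\right\rangle\cap\bigcap_{k=t}^{(i-3)/4}T\!\left(\tfrac{i+1}{2}+2k+1\right),\] and this intersection is a factorization of $S(i)$ into irreducible numerical semigroups (i.e. it cannot be refined).
   Context: $\mathbb{N}$ denotes the non-negative integers. A numerical semigroup is a submonoid of $(\mathbb{N},+)$ with finite complement. A numerical semigroup is irreducible if it cannot be written as the intersection of two numerical semigroups properly containing it. $\langle a,b\rangle=\{xa+yb:x,y\in\mathbb{N}\}$; for $b$ odd, $\langle 2,b\rangle$ is irreducible. For an odd integer $j\ge 3$, $T(j)=\{0,\tfrac{j+1}{2},\tfrac{j+1}{2}+1,\dots,j-1\}\cup\{n\in\mathbb{Z}:n\ge j+1\}$; each $T(j)$ is an irreducible numerical semigroup. For odd $i\ge5$, $S(i)=\langle 2,i\rangle\cap T(i)$. Given a numerical semigroup $S$ and irreducible numerical semigroups $S_1,\dots,S_n$, the expression $S_1\cap\dots\cap S_n$ is a factorization of $S$ (of length $n$) if $S=S_1\cap\dots\cap S_n$ and $S\neq\bigcap_{j\in J}S_j$ for every nonempty proper subset $J\subsetneq\{1,\dots,n\}$. *)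

(* Defs.v *)
From mathcomp Require Import all_boot.
Set Implicit Arguments.
Unset Strict Implicit.
Unset Printing Implicit Defensive.

Definition nset := nat -> Prop.

Definition nset_eq (A B : nset) : Prop := forall n, A n <-> B n.

Definition nset_cap (A B : nset) : nset := fun n => A n /\ B n.

Definition numerical_semigroup (S : nset) : Prop :=
  S 0 /\ (forall a b, S a -> S b -> S (a + b)) /\
  (exists N, forall n, N <= n -> S n).

Definition irreducible_ns (S : nset) : Prop :=
  numerical_semigroup S /\
  ~ (exists S1 S2 : nset,
       numerical_semigroup S1 /\ numerical_semigroup S2 /\
       (forall n, S n -> S1 n) /\ ~ nset_eq S1 S /\
       (forall n, S n -> S2 n) /\ ~ nset_eq S2 S /\
       nset_eq S (nset_cap S1 S2)).

Definition gen2 (a b : nat) : nset := fun n => exists x y, n = x * a + y * b.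

Definition Tj (j : nat) : nset :=
  fun n => n = 0 \/ ((j + 1) %/ 2 <= n /\ n <= j - 1) \/ j + 1 <= n.

Definition Si (i : nat) : nset := nset_cap (gen2 2 i) (Tj i).

Definition big_cap (n : nat) (F : 'I_n -> nset) (J : {set 'I_n}) : nset :=
  fun x => forall j, j \in J -> F j x.

Definition is_factorization (S : nset) (n : nat) (F : 'I_n -> nset) : Prop :=
  numerical_semigroup S /\
  (forall j, irreducible_ns (F j)) /\
  nset_eq S (big_cap F setT) /\
  (forall J : {set 'I_n}, J != set0 -> J != setT -> ~ nset_eq S (big_cap F J)).

(* The family of the lemma, indexed by 'I_(m - t + 2) with m = (i-3)/4:
   index 0 is <2, (i+1)/2 + 2t + 1>, index j >= 1 is T((i+1)/2 + 2k + 1)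
   with k = t + j - 1, so k ranges over t..m. *)
Arguments big_cap : clear implicits.
Arguments big_cap {n} F J.
Definition lemma_family (i t : nat) : 'I_((i - 3) %/ 4 - t + 2) -> nset :=
  fun j => if val j == 0 then gen2 2 ((i + 1) %/ 2 + 2 * t + 1)
           else Tj ((i + 1) %/ 2 + 2 * (t + val j - 1) + 1).
Arguments lemma_family i t j : clear implicits.

(* Main.v *)
Require Import Defs.
From mathcomp Require Import all_boot.
From mathcomp Require Import zify.
From Stdlib Require Import Classical.

Lemma gen2_elim b n : odd b -> gen2 2 b n -> ~~ odd n \/ b <= n.
Proof.
move=> Hb [x [y ->]]; case: y => [|y]; first by left; lia.
right; rewrite mulSn; lia.
Qed.

Lemma gen2_intro b n : odd b -> ~~ odd n \/ b <= n -> gen2 2 b n.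
Proof.
move=> Hb H.
case Hn: (odd n).
- have Hbn : b <= n by move: H Hn; lia.
  exists ((n - b) %/ 2), 1; lia.
- exists (n %/ 2), 0; lia.
Qed.

Lemma ns_cap A B : numerical_semigroup A -> numerical_semigroup B ->
  numerical_semigroup (nset_cap A B).
Proof.
move=> [A0 [AD [N1 HN1]]] [B0 [BD [N2 HN2]]]; split; first by split.
split; first by move=> a b [? ?] [? ?]; split; auto.
exists (N1 + N2) => n Hn; split; [apply: HN1 | apply: HN2]; lia.
Qed.

Lemma ns_gen2 b : odd b -> numerical_semigroup (gen2 2 b).
Proof.
move=> Hb; split; first by exists 0, 0.
split.
  move=> a c [x1 [y1 ->]] [x2 [y2 ->]]; exists (x1 + x2), (y1 + y2).
  rewrite !mulnDl; lia.
exists b => n Hn; apply: gen2_intro => //; by right.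
Qed.

Lemma ns_Tj j : odd j -> numerical_semigroup (Tj j).
Proof.
move=> Hj; split; first by left.
split; last by exists (j + 1) => n Hn; right; right.
rewrite /Tj => a c Ha Hc; lia.
Qed.

Lemma strict_ex (S S' : nset) : (forall n, S n -> S' n) -> ~ nset_eq S' S ->
  exists x, S' x /\ ~ S x.
Proof.
move=> Hs Hne; apply: NNPP => Hn; apply: Hne => n; split; last exact: Hs.
move=> H; apply: NNPP => H2; apply: Hn; by exists n.
Qed.

Lemma ns_add2 (S : nset) x : numerical_semigroup S -> S x -> S 2 ->
  forall k, S (x + 2 * k).
Proof.
move=> [_ [HD _]] Hx H2; elim=> [|k IH]; first by rewrite muln0 addn0.
have -> : x + 2 * k.+1 = (x + 2 * k) + 2 by lia.
exact: HD.
Qed.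

Lemma gen2_super b S : odd b -> 3 <= b -> numerical_semigroup S ->
  (forall n, gen2 2 b n -> S n) -> ~ nset_eq S (gen2 2 b) -> S (b - 2).
Proof.
move=> Hb Hb3 HS Hsub Hne.
have [x [Sx Nx]] := strict_ex _ _ Hsub Hne.
have Hx : odd x /\ x < b.
  case: (boolP (odd x)) => Ho; last by exfalso; apply: Nx; apply: gen2_intro => //; left.
  case: (ltnP x b) => Hxb; first by [].
  exfalso; apply: Nx; apply: gen2_intro => //; by right.
have S2 : S 2 by apply: Hsub; exists 1, 0.
have := ns_add2 _ _ HS Sx S2 ((b - 2 - x) %/ 2).
have -> : x + 2 * ((b - 2 - x) %/ 2) = b - 2 by lia.
done.
Qed.

Lemma irr_gen2 b : odd b -> 3 <= b -> irreducible_ns (gen2 2 b).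
Proof.
move=> Hb Hb3; split; first exact: ns_gen2.
case=> S1 [S2 [N1 [N2 [s1 [ne1 [s2 [ne2 eq]]]]]]].
have h1 := gen2_super _ _ Hb Hb3 N1 s1 ne1.
have h2 := gen2_super _ _ Hb Hb3 N2 s2 ne2.
have := (proj2 (eq (b - 2))) (conj h1 h2).
move/(gen2_elim _ _ Hb); lia.
Qed.

Lemma Tj_super j S : odd j -> 3 <= j -> numerical_semigroup S ->
  (forall n, Tj j n -> S n) -> ~ nset_eq S (Tj j) -> S j.
Proof.
move=> Hj Hj3 [S0 [SD _]] Hsub Hne.
have [x [Sx Nx]] := strict_ex _ _ Hsub Hne.
case: (eqVneq x j) => [<- //|xj].
have Hx : 0 < x < (j + 1) %/ 2.
  apply/negP => Hc; apply: Nx; rewrite /Tj; move/eqP: xj; move/negP: Hc; lia.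
have Sy : S (j - x) by apply: Hsub; rewrite /Tj; lia.
have := SD _ _ Sx Sy; have -> : x + (j - x) = j by lia.
done.
Qed.

Lemma irr_Tj j : odd j -> 3 <= j -> irreducible_ns (Tj j).
Proof.
move=> Hj Hj3; split; first exact: ns_Tj.
case=> S1 [S2 [N1 [N2 [s1 [ne1 [s2 [ne2 eq]]]]]]].
have h1 := Tj_super _ _ Hj Hj3 N1 s1 ne1.
have h2 := Tj_super _ _ Hj Hj3 N2 s2 ne2.
have := (proj2 (eq j)) (conj h1 h2).
rewrite /Tj; lia.
Qed.

Theorem lemma2p3 (i t : nat) :
  odd i -> 7 <= i -> ~~ odd ((i + 1) %/ 2) ->
  1 <= t -> t <= (i - 3) %/ 4 ->
  nset_eq (Si i)
    (nset_cap (gen2 2 ((i + 1) %/ 2 + 2 * t + 1))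
              (fun n => forall k, t <= k <= (i - 3) %/ 4 ->
                          Tj ((i + 1) %/ 2 + 2 * k + 1) n))
  /\ is_factorization (Si i) (lemma_family i t).
Proof.
move=> Hi Hi7 Hh Ht1 Htm.
have [m Hm] : exists m, m = (i - 3) %/ 4 by eauto.
have Him : i = 4 * m + 3 by  lia.
have Hhm : (i + 1) %/ 2 = 2 * m + 2 by  lia.
have Hat : odd ((i + 1) %/ 2 + 2 * t + 1) by rewrite Hhm; lia.
have Schar : forall n, Si i n <-> (n = 0 \/ (~~ odd n /\ 2 * m + 2 <= n) \/
                                   4 * m + 5 <= n).
  move=> n; split.
  - case=> /(gen2_elim _ _ Hi) H1; rewrite /Tj Hhm; lia.
  - move=> H; split.
    + apply: gen2_intro => //; lia.
    + rewrite /Tj Hhm; lia.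
have Heq : nset_eq (Si i)
    (nset_cap (gen2 2 ((i + 1) %/ 2 + 2 * t + 1))
              (fun n => forall k, t <= k <= (i - 3) %/ 4 ->
                          Tj ((i + 1) %/ 2 + 2 * k + 1) n)).
  move=> n; rewrite Schar; split.
  - move=> H; split.
    + apply: gen2_intro => //; rewrite Hhm; lia.
    + move=> k Hk; rewrite /Tj Hhm; lia.
  - case=> /(gen2_elim _ _ Hat) H1 H2.
    have T1 := H2 m; have T2 := H2 ((n - 2 * m - 3) %/ 2).
    move: T1 T2; rewrite /Tj Hhm; lia.
split => //.
have Sns : numerical_semigroup (Si i).
  apply: ns_cap; [exact: ns_gen2 | exact: ns_Tj].
split => //.
split.
  move=> j; rewrite /lemma_family; case: eqP => _.
  - apply: irr_gen2 => //; rewrite Hhm; lia.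
  - apply: irr_Tj; rewrite Hhm; lia.
have Hlt : forall j : 'I_((i - 3) %/ 4 - t + 2), nat_of_ord j <= m - t + 1.
  by move=> [j Hj] /=; lia.
split.
  move=> n; rewrite (Heq n); split.
  - case=> H1 H2 j _; rewrite /lemma_family /=; case: eqP => //= Hj0.
    apply: H2; have := Hlt j; lia.
  - move=> H; split.
    + have H0 : 0 < (i - 3) %/ 4 - t + 2 by lia.
      have := H (Ordinal H0) (in_setT _); by rewrite /lemma_family /=.
    + move=> k Hk.
      have Hk' : k - t + 1 < (i - 3) %/ 4 - t + 2 by lia.
      have := H (Ordinal Hk') (in_setT _); rewrite /lemma_family /=.
      have -> : (k - t + 1 == 0) = false by lia.
      have -> : (i + 1) %/ 2 + 2 * (t + (k - t + 1) - 1) + 1 =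
                (i + 1) %/ 2 + 2 * k + 1 by lia.
      done.
move=> J _ HJT HJ.
have H0 : 0 < (i - 3) %/ 4 - t + 2 by lia.
set j0 := Ordinal H0.
case: (boolP (j0 \in J)) => Hj0.
- have : ~~ [forall x, x \in J].
    apply: contra HJT => /forallP H; apply/eqP/setP => x; by rewrite inE H.
  rewrite negb_forall => /existsP [j Hj].
  have Hjv : nat_of_ord j != 0.
    apply/negP => /eqP Hv; have Hjj : j = j0 by apply: val_inj.
    by move: Hj; rewrite Hjj Hj0.
  have Hjl := Hlt j.
  have : big_cap (lemma_family i t) J (2 * m + 2 * (t + nat_of_ord j - 1) + 3).
    move=> j' Hj'; rewrite /lemma_family /=; case: eqP => /= Hv.
    + apply: gen2_intro => //; rewrite Hhm; lia.
    + have Hjj : nat_of_ord j' != nat_of_ord j.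
        apply/negP => /eqP Hv'; have Hjj : j' = j by apply: val_inj.
        by move: Hj; rewrite -Hjj Hj'.
      have := Hlt j'; rewrite /Tj Hhm; move: Hjj Hv; lia.
  move/(proj2 (HJ _)); rewrite Schar; lia.
- have : big_cap (lemma_family i t) J (2 * m + 3).
    move=> j' Hj'; rewrite /lemma_family /=; case: eqP => /= Hv.
    + have Hjj : j' = j0 by apply: val_inj.
      by move: Hj0; rewrite -Hjj Hj'.
    + have := Hlt j'; rewrite /Tj Hhm; move: Hv; lia.
  move/(proj2 (HJ _)); rewrite Schar; lia.
Qed.
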